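(* Let $q$ be a prime power. (i) If $C$ is an $[n,k,d]$ linear code over $\mathbb{F}_q$ whose Euclidean hull $C\cap C^{\perp_E}$ has dimension $l$, then there exists a set $T$ of $l$ coordinate positions such that the shortened code $C_T$ of $C$ on $T$ is a Euclidean LCD $[n-l,k-l,d']$ code with $d'\ge d$. (ii) If $C$ is an $[n,k,d]$ linear code over $\mathbb{F}_{q^2}$ whose Hermitian hull $C\cap C^{\perp_H}$ has dimension $l$, then there exists a set $T$ of $l$ coordinate positions such that the shortened code $C_T$ of $C$ on $T$ is a Hermitian LCD $[n-l,k-l,d']$ code with $d'\ge d$.
   Context: An $[n,k,d]$ linear code over a finite field $F$ is a $k$-dimensional subspace of $F^n$ with minimum nonzero Hamming weight $d$. Euclidean inner product on $\mathbb{F}_q^n$: $\langle x,y\rangle_E=\sum x_iy_i$; Hermitian inner product on $\mathbb{F}_{q^2}^n$: $\langle x,y\rangle_H=\sum x_iy_i^q$; $C^{\perp_E}$, $C^{\perp_H}$ are the corresponding dual codes. The (Euclidean/Hermitian) hull of $C$ is $C\cap C^{\perp}$; $C$ is (Euclidean/Hermitian) LCD if its hull is $\{0\}$. For a set $T$ of $t$ coordinate positions, let $C(T)$ be the subcode of codewords that are $0$ on all positions of $T$; the shortened code $C_T$ is obtained from $C(T)$ by deleting the coordinates in $T$, and has length $n-t$. *)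

(* Defs.v *)
From HB Require Import structures.
From mathcomp Require Import all_boot all_order all_algebra.
Set Implicit Arguments. Unset Strict Implicit. Unset Printing Implicit Defensive.
Import GRing.Theory.
Local Open Scope ring_scope.

Section Codes.
Variable F : finFieldType.

Definition wt (n : nat) (x : 'rV[F]_n) : nat := #|[set i | x ord0 i != 0]|.

Definition min_dist_ge (n : nat) (C : {vspace 'rV[F]_n}) (d : nat) : Prop :=
  forall x, x \in C -> x != 0 -> (d <= wt x)%N.

Definition is_min_dist (n : nat) (C : {vspace 'rV[F]_n}) (d : nat) : Prop :=
  (exists2 x, (x \in C) && (x != 0) & wt x = d) /\ min_dist_ge C d.

Definition ipE (n : nat) (x y : 'rV[F]_n) : F := \sum_(i < n) x ord0 i * y ord0 i.
Definition ipH (q n : nat) (x y : 'rV[F]_n) : F :=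
  \sum_(i < n) x ord0 i * (y ord0 i) ^+ q.

Definition dualE (n : nat) (C : {vspace 'rV[F]_n}) : {vspace 'rV[F]_n} :=
  <<enum [set y : 'rV[F]_n | [forall x : 'rV[F]_n, (x \in C) ==> (ipE x y == 0%R)]]>>%VS.
Definition dualH (q n : nat) (C : {vspace 'rV[F]_n}) : {vspace 'rV[F]_n} :=
  <<enum [set y : 'rV[F]_n | [forall x : 'rV[F]_n, (x \in C) ==> (ipH q x y == 0%R)]]>>%VS.

Definition hullE (n : nat) (C : {vspace 'rV[F]_n}) := (C :&: dualE C)%VS.
Definition hullH (q n : nat) (C : {vspace 'rV[F]_n}) := (C :&: dualH q C)%VS.

Definition LCD_E (n : nat) (C : {vspace 'rV[F]_n}) : Prop := hullE C = 0%VS.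
Definition LCD_H (q n : nat) (C : {vspace 'rV[F]_n}) : Prop := hullH q C = 0%VS.

(* deleting the coordinates in T: keep the coordinates of ~: T, in increasing order *)
Definition delete (n : nat) (T : {set 'I_n}) (x : 'rV[F]_n) : 'rV[F]_#|~: T| :=
  \row_(j < #|~: T|) x ord0 (@enum_val _ (pred_of_set (~: T)) j).

Definition shortened (n : nat) (C : {vspace 'rV[F]_n}) (T : {set 'I_n})
  : {vspace 'rV[F]_#|~: T|} :=
  <<[seq delete T x | x <- enum [set x : 'rV[F]_n |
        (x \in C) && [forall i in T, x ord0 i == 0%R]]]>>%VS.

End Codes.

(* Main.v *)
From HB Require Import structures.
Require Import Defs.
From mathcomp Require Import all_boot all_order all_algebra all_field.
From mathcomp Require Import zify.
Set Implicit Arguments. Unset Strict Implicit. Unset Printing Implicit Defensive.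
Import GRing.Theory.
Local Open Scope ring_scope.

Lemma span_ind (K : fieldType) (vT : vectType K) (P : vT -> Prop) (X : seq vT) :
  P 0 -> (forall a u v, P u -> P v -> P (a *: u + v)) -> (forall x, x \in X -> P x) ->
  forall v, v \in <<X>>%VS -> P v.
Proof.
move=> P0 PC PX v vX; rewrite (@coord_span _ _ _ (in_tuple X) v vX).
apply: (big_ind P) => //.
  by move=> u w Pu Pw; rewrite -[u]scale1r; apply: PC.
move=> i _; rewrite -[_ *: _]addr0; apply: PC => //; apply: PX; exact: mem_nth.
Qed.

Section Lin.
Variables (F : finFieldType) (n : nat) (T : {set 'I_n}).
Definition projT (x : 'rV[F]_n) : 'rV[F]_n := \row_i (if i \in T then x 0 i else 0).
Fact projT_lin : linear projT.
Proof. by move=> a x y; apply/rowP=> i; rewrite !mxE; case: ifP => _; rewrite ?mulr0 ?addr0. Qed.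
HB.instance Definition _ := GRing.isLinear.Build F 'rV_n 'rV_n _ projT projT_lin.
Fact delete_lin : linear (@delete F n T).
Proof. by move=> a x y; apply/rowP=> i; rewrite !mxE. Qed.
HB.instance Definition _ := GRing.isLinear.Build F 'rV_n 'rV_#|~: T| _ (@delete F n T) delete_lin.
Definition fT := linfun projT.
Definition gT := linfun (@delete F n T).
Lemma fTE x : fT x = projT x. Proof. by rewrite lfunE. Qed.
Lemma gTE x : gT x = delete T x. Proof. by rewrite lfunE. Qed.
End Lin.

Section Gen.
Variables (F : finFieldType) (s : F -> F).
Hypotheses (sD : {morph s : a b / a + b}) (sM : {morph s : a b / a * b}) (sK : involutive s).

Lemma s0 : s 0 = 0.
Proof. by apply: (@addrI _ (s 0)); rewrite -sD !addr0. Qed.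

Definition ipS m (x y : 'rV[F]_m) := \sum_(i < m) x ord0 i * s (y ord0 i).
Definition dualS m (C : {vspace 'rV[F]_m}) : {vspace 'rV[F]_m} :=
  <<enum [set y : 'rV[F]_m | [forall x : 'rV[F]_m, (x \in C) ==> (ipS x y == 0%R)]]>>%VS.

Lemma ipS_lin2 m (x u v : 'rV[F]_m) a : ipS x (a *: u + v) = s a * ipS x u + ipS x v.
Proof.
rewrite /ipS mulr_sumr -big_split; apply: eq_bigr => i _.
by rewrite !mxE sD sM mulrDr mulrCA.
Qed.

Lemma ipS_add1 m (x u v : 'rV[F]_m) : ipS (u + v) x = ipS u x + ipS v x.
Proof. by rewrite /ipS -big_split; apply: eq_bigr => i _; rewrite !mxE mulrDl. Qed.

Lemma ipS_sym m (x y : 'rV[F]_m) : ipS y x = 0 -> ipS x y = 0.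
Proof.
move=> h; rewrite -s0 -h /ipS (big_morph s sD s0); apply: eq_bigr => i _.
by rewrite sM sK mulrC.
Qed.

Lemma memdualP m (C : {vspace 'rV[F]_m}) y :
  y \in dualS C <-> forall x, x \in C -> ipS x y = 0.
Proof.
split.
  move=> yD x xC; move: y yD; apply: span_ind.
  - by rewrite /ipS big1 // => i _; rewrite mxE s0 mulr0.
  - by move=> a u v hu hv; rewrite ipS_lin2 hu hv mulr0 addr0.
  - by move=> z; rewrite mem_enum inE => /forallP/(_ x)/implyP/(_ xC)/eqP.
move=> h; apply: memv_span; rewrite mem_enum inE; apply/forallP => x.
by apply/implyP => xC; rewrite h.
Qed.
End Gen.

Section Short.
Variables (F : finFieldType) (n : nat).

Lemma zeroT_proj (T : {set 'I_n}) (x : 'rV[F]_n) :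
  [forall i in T, x ord0 i == 0] = (projT T x == 0).
Proof.
apply/forall_inP/eqP => [h|h].
  by apply/rowP => i; rewrite !mxE; case: ifP => // iT; apply/eqP/h.
by move=> i iT; move/rowP/(_ i): h; rewrite !mxE iT => ->.
Qed.

Lemma memshortP (C : {vspace 'rV[F]_n}) (T : {set 'I_n}) y :
  y \in shortened C T <-> exists x, [/\ x \in C, projT T x = 0 & y = delete T x].
Proof.
split.
  move: y; apply: span_ind.
  - by exists 0; rewrite mem0v linear0 linear0.
  - move=> a u v [x [xC px ->]] [z [zC pz ->]]; exists (a *: x + z).
    split; [by rewrite memvD ?memvZ | |by rewrite linearP].
    have -> : projT T (a *: x + z) = a *: projT T x + projT T z by rewrite linearP.
    by rewrite px pz scaler0 addr0.
  - move=> z /mapP [x]; rewrite mem_enum inE => /andP [xC]; rewrite zeroT_proj => /eqP px ->.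
    by exists x.
move=> [x [xC px ->]]; apply: memv_span; apply: map_f.
by rewrite mem_enum inE xC zeroT_proj px eqxx.
Qed.
End Short.

Section ST.
Variables (F : finFieldType) (n : nat).
Implicit Types (T : {set 'I_n}) (H : {vspace 'rV[F]_n}).

Definition ST T : {vspace 'rV[F]_n} := <<[seq delta_mx 0%R i | i <- enum T]>>%VS.

Lemma dim_ST_le T : (\dim (ST T) <= #|T|)%N.
Proof. by apply: leq_trans (dim_span _) _; rewrite size_map -cardE. Qed.

Lemma delta_ST T i : i \in T -> delta_mx 0 i \in ST T.
Proof. by move=> iT; apply: memv_span; apply: map_f; rewrite mem_enum. Qed.

Lemma projT_ST T x : projT T x \in ST T.
Proof.
rewrite (row_sum_delta (projT T x)) (bigID (fun j => j \in T)) /=.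
rewrite [X in _ + X]big1 ?addr0; last by move=> j jT; rewrite mxE (negbTE jT) scale0r.
by apply: memv_suml => j jT; apply: memvZ; apply: delta_ST.
Qed.

Lemma projT_split T (x : 'rV[F]_n) : x = projT T x + projT (~: T) x.
Proof. by apply/rowP => i; rewrite !mxE inE; case: (i \in T); rewrite ?addr0 ?add0r. Qed.

Lemma dim_ST T : \dim (ST T) = #|T|.
Proof.
have full : (fullv <= ST T + ST (~: T))%VS.
  by apply/subvP => x _; rewrite (projT_split T x) memv_add ?projT_ST.
have := dimvS full; rewrite dimvf dim_matrix mul1r => h.
have h2 := leq_trans h (dimv_add_leqif _ _).
have h3 := dim_ST_le T; have h4 := dim_ST_le (~: T).
have hc := cardsC T; rewrite card_ord in hc.
apply/eqP; rewrite eqn_leq h3 /=.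
rewrite -(leq_add2r (\dim (ST (~: T)))); apply: leq_trans _ h2.
apply: (@leq_trans (#|T| + #|~: T|)); first by rewrite leq_add2l. by rewrite hc.
Qed.

Definition injb T H := [forall x : 'rV[F]_n, (x \in H) && (projT T x == 0) ==> (x == 0)].

Lemma injbP T H : reflect (forall x, x \in H -> projT T x = 0 -> x = 0) (injb T H).
Proof.
apply: (iffP forallP) => [h x xH px|h x]; first by move: (h x); rewrite xH px eqxx /= => /eqP.
by apply/implyP => /andP [xH /eqP px]; rewrite (h x xH px).
Qed.

Lemma injb_cap T H : injb T H -> (H :&: lker (fT F T) = 0)%VS.
Proof.
move/injbP => h; apply/eqP; rewrite -subv0; apply/subvP => x /memv_capP [xH].
by rewrite memv_ker fTE memv0 => /eqP px; rewrite (h x xH px).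
Qed.

Lemma img_ST T U : (fT F T @: U <= ST T)%VS.
Proof. by apply/subvP => y /memv_imgP [x _ ->]; rewrite fTE projT_ST. Qed.

Lemma dim_img_le T H : (\dim (fT F T @: H) <= \dim H)%N.
Proof. by rewrite -(limg_ker_dim (fT F T) H) leq_addl. Qed.

Lemma exT H : exists T, #|T| = \dim H /\ injb T H.
Proof.
suff: forall m T, #|T| = m -> injb T H -> exists T, #|T| = \dim H /\ injb T H.
  move=> h; apply: (h _ setT erefl); apply/injbP => x _ <-; apply/rowP => i; rewrite mxE in_setT. done.
have key : forall T, injb T H -> (#|T| <= \dim H)%N -> #|T| = \dim H.
  move=> T ihT le; apply/eqP; rewrite eqn_leq le /=.
  rewrite -(limg_dim_eq (injb_cap ihT)).
  by apply: leq_trans (dimvS (img_ST T H)) _; rewrite dim_ST.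
elim=> [|m IH] T cT ihT.
  by exists T; split => //; apply: key; rewrite ?cT.
have [le|lt] := leqP #|T| (\dim H).
  by exists T; split => //; apply: key.
case: (boolP [exists i in T, injb (T :\ i) H]) => [/exists_inP [i iT hi]|none].
  apply: (IH (T :\ i)) => //.
  by move: cT; rewrite (cardsD1 i T) iT add1n => -[].
exfalso; suff: (ST T <= fT F T @: H)%VS.
  move/dimvS; rewrite dim_ST => h.
  by have := leq_trans h (dim_img_le T H); rewrite leqNgt lt.
apply/span_subvP => y /mapP [i]; rewrite mem_enum => iT ->.
move: none => /exists_inP nex.
have : ~~ injb (T :\ i) H by apply/negP => hi; apply: nex; exists i.
move=> /forallPn [x]; rewrite negb_imply => /andP [/andP [xH /eqP px] xn0].
have pTx : projT T x = x 0 i *: delta_mx 0 i.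
  apply/rowP => j; move/rowP/(_ j): px; rewrite !mxE !inE.
  case: (eqVneq j i) => [->|ji] /=; first by rewrite iT mulr1.
  by rewrite mulr0.
have xi0 : x 0 i != 0.
  apply: contraNneq xn0 => xi; apply/eqP; move/injbP: ihT; apply => //.
  by rewrite pTx xi scale0r.
have -> : delta_mx 0 i = (x 0 i)^-1 *: projT T x by rewrite pTx scalerA mulVf // scale1r.
by apply: memvZ; rewrite -fTE; apply: memv_img.
Qed.
End ST.

Section Del.
Variables (F : finFieldType) (n : nat) (T : {set 'I_n}).

Lemma delete_inj0 (x : 'rV[F]_n) : projT T x = 0 -> delete T x = 0 -> x = 0.
Proof.
move=> /rowP px /rowP dx; apply/rowP => i; rewrite mxE.
case iT: (i \in T); first by move: (px i); rewrite !mxE iT.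
have iTc : i \in ~: T by rewrite inE iT.
by move: (dx (enum_rank_in iTc i)); rewrite !mxE enum_rankK_in.
Qed.

Lemma wt_delete (x : 'rV[F]_n) : projT T x = 0 -> wt (delete T x) = wt x.
Proof.
move=> /rowP px; rewrite /wt.
have e : [set i | x ord0 i != 0] =
    (@enum_val _ (pred_of_set (~: T))) @: [set j | delete T x ord0 j != 0].
  apply/setP => i; rewrite inE; apply/idP/imsetP; last first.
    by move=> [j]; rewrite inE mxE => h ->.
  move=> xi.
  have iTc : i \in ~: T.
    by rewrite inE; apply/negP => iT; move: (px i); rewrite !mxE iT => e; rewrite e eqxx in xi.
  exists (enum_rank_in iTc i); last by rewrite enum_rankK_in.
  by rewrite inE /delete mxE enum_rankK_in.
by rewrite e card_imset //; apply: enum_val_inj.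
Qed.

Lemma ip_delete s (x y : 'rV[F]_n) : projT T x = 0 -> ipS s (delete T x) (delete T y) = ipS s x y.
Proof.
move=> /rowP px; rewrite /ipS.
rewrite (bigID (fun i => i \in ~: T)) /= [X in _ + X]big1 ?addr0; last first.
  by move=> i; rewrite inE negbK => iT; move: (px i); rewrite !mxE iT => ->; rewrite mul0r.
rewrite (big_enum_val (fun i => x ord0 i * s (y ord0 i))).
by apply: eq_bigr => j _; rewrite !mxE.
Qed.
End Del.

Section Main.
Variables (F : finFieldType) (s : F -> F).
Hypotheses (sD : {morph s : a b / a + b}) (sM : {morph s : a b / a * b}) (sK : involutive s).

Theorem gen n (C : {vspace 'rV[F]_n}) d :
  min_dist_ge C d ->
  exists T : {set 'I_n},
    [/\ #|T| = \dim (C :&: dualS s C)%VS,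
        #|~: T| = (n - \dim (C :&: dualS s C)%VS)%N,
        \dim (shortened C T) = (\dim C - \dim (C :&: dualS s C)%VS)%N,
        (shortened C T :&: dualS s (shortened C T))%VS = 0%VS
      & min_dist_ge (shortened C T) d].
Proof.
move=> md.
set H := (C :&: dualS s C)%VS.
have [T [cT ihT]] := exT H.
have HC : (H <= C)%VS by apply: capvSl.
have dimH : \dim (fT F T @: H) = \dim H by apply: limg_dim_eq; apply: injb_cap.
have imgH : (fT F T @: H)%VS = ST F T.
  apply/eqP; rewrite eqEdim img_ST /= dim_ST dimH cT //.
have dimC : \dim (fT F T @: C) = \dim H.
  apply/eqP; rewrite eqn_leq; apply/andP; split.
    by rewrite -cT -(dim_ST F T); apply: dimvS; apply: img_ST.
  by rewrite -dimH; apply: dimvS; apply: limgS.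
set CT := (C :&: lker (fT F T))%VS.
have dimCT : \dim CT = (\dim C - \dim H)%N.
  by rewrite -(limg_ker_dim (fT F T) C) dimC addnK.
have memCT x : x \in CT = (x \in C) && (projT T x == 0).
  by rewrite memv_cap memv_ker fTE.
have shE : shortened C T = (gT F T @: CT)%VS.
  apply/vspaceP => y; apply/idP/idP.
    move/memshortP => [x [xC px ->]]; rewrite -gTE; apply: memv_img.
    by rewrite memCT xC px eqxx.
  move/memv_imgP => [x]; rewrite memCT => /andP [xC /eqP px] ->; rewrite gTE.
  by apply/memshortP; exists x.
have dimS : \dim (shortened C T) = (\dim C - \dim H)%N.
  have cap0 : (CT :&: lker (gT F T) = 0)%VS.
    apply/eqP; rewrite -subv0; apply/subvP => x.
    rewrite memv_cap memCT memv_ker gTE memv0 => /andP [/andP [_ /eqP px] /eqP dx].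
    by rewrite (delete_inj0 px dx).
  by rewrite shE (limg_dim_eq cap0).
exists T; split => //.
- have e := cardsC T; rewrite card_ord cT in e; lia.
- apply/eqP; rewrite -subv0; apply/subvP => y /memv_capP [yS yD]; rewrite memv0.
  have [z [zC pz ye]] := (memshortP C y).1 yS.
  have zD : z \in dualS s C.
    apply/(memdualP sD sM) => x xC.
    have : projT T x \in (fT F T @: H)%VS by rewrite imgH projT_ST.
    move/memv_imgP => [h hH]; rewrite fTE => ph.
    have hD : h \in dualS s C by move: hH; rewrite memv_cap => /andP [].
    have hC : h \in C by apply: (subvP HC).
    have -> : x = (x - h) + h by rewrite subrK.
    rewrite ipS_add1 (ipS_sym sD sM sK (x:=h) (y:=z)) ?addr0; last first.
      by apply: (proj1 (memdualP sD sM _ _) hD z zC).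
    have p1 : projT T (x - h) = 0 by rewrite linearB /= ph subrr.
    rewrite -(ip_delete _ _ p1).
    apply: (proj1 (memdualP sD sM _ _) _); first by rewrite -ye; exact: yD.
    by apply/memshortP; exists (x - h); rewrite memvB.
  have zH : z \in H by rewrite memv_cap zC zD.
  by move/injbP: ihT => /(_ z zH pz) zz; rewrite ye zz linear0.
- move=> y /memshortP [x [xC px ->]] yn0.
  have xn0 : x != 0 by apply: contraNneq yn0 => ->; rewrite linear0.
  by rewrite wt_delete //; apply: md.
Qed.
End Main.

Lemma herm_facts (F : finFieldType) (q : nat) : #|F| = (q ^ 2)%N ->
  [/\ {morph (fun a : F => a ^+ q) : a b / a + b},
      {morph (fun a : F => a ^+ q) : a b / a * b} &
      involutive (fun a : F => a ^+ q)].
Proof.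
move=> cF.
have [p pp pcharFp] := finPcharP F.
have hc := card_pprimeChar pcharFp.
have pn : p.-nat #|F|.
  by rewrite hc pnatX pnat_id.
have qn : [pchar F].-nat q.
  have : p.-nat (q * q)%N by rewrite mulnn -cF.
  rewrite pnatM andbb; apply: sub_in_pnat => r _; rewrite inE => /eqP ->; exact: pcharFp.
split.
- by move=> a b /=; rewrite exprDn_pchar.
- by move=> a b /=; rewrite exprMn.
- by move=> a /=; rewrite -exprM (mulnn q) -cF expf_card.
Qed.
Theorem theorem3p2 :
  (forall (F : finFieldType) (n k d l : nat) (C : {vspace 'rV[F]_n}),
     \dim C = k -> is_min_dist C d -> \dim (hullE C) = l ->
     exists T : {set 'I_n},
       [/\ #|T| = l, #|~: T| = (n - l)%N, \dim (shortened C T) = (k - l)%N,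
           LCD_E (shortened C T) & min_dist_ge (shortened C T) d])
  /\
  (forall (F : finFieldType) (q n k d l : nat) (C : {vspace 'rV[F]_n}),
     #|F| = (q ^ 2)%N ->
     \dim C = k -> is_min_dist C d -> \dim (hullH q C) = l ->
     exists T : {set 'I_n},
       [/\ #|T| = l, #|~: T| = (n - l)%N, \dim (shortened C T) = (k - l)%N,
           LCD_H q (shortened C T) & min_dist_ge (shortened C T) d]).
Proof.
split.
  move=> F n k d l C <- [_ md] <-.
  have sD : {morph (fun a : F => a) : a b / a + b} by [].
  have sM : {morph (fun a : F => a) : a b / a * b} by [].
  have sK : involutive (fun a : F => a) by [].
  exact: (gen sD sM sK md).
move=> F q n k d l C cF <- [_ md] <-.
have [sD sM sK] := herm_facts cF.
exact: (gen sD sM sK md).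
Qed.
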